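(* Let $m\ge 7$ be an integer. Then for every integer $n\ge m-1$, $$F_{n+2^{m-6},2}\equiv F_{n,2}\pmod{2^m},$$ i.e. from the term of index $m-1$ onward the sequence $(F_{n,2}\bmod 2^m)_{n\ge0}$ is periodic with period $2^{m-6}$.
   Context: For positive integers $r\le m\le n$, $S_r(n,m)$ denotes the $r$-Stirling number of the second kind: the number of partitions of $\{1,\dots,n\}$ into $m$ non-empty blocks such that $1,\dots,r$ lie in pairwise distinct blocks. For a positive integer $r$ and integer $n\ge 0$, the $r$-Fubini number is $F_{n,r}=\sum_{k=0}^{n}(k+r)!\,S_r(n+r,k+r)$. *)

(* Defs.v *)
From mathcomp Require Import all_boot.
Set Implicit Arguments. Unset Strict Implicit. Unset Printing Implicit Defensive.

(* r-Stirling number of the second kind: number of partitions of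
   {1,...,n} (encoded as 'I_n, element k+1 <-> ordinal k) into m non-empty
   blocks such that 1,...,r (ordinals of value < r) lie in pairwise distinct blocks. *)
Definition rstirling2 (r n m : nat) : nat :=
  #|[set P : {set {set 'I_n}} |
      [&& partition P [set: 'I_n], #|P| == m &
          [forall i : 'I_n, forall j : 'I_n,
             ((i < r) && (j < r) && (i != j)) ==> (pblock P i != pblock P j)]]]|.

Definition rfubini (n r : nat) : nat :=
  \sum_(0 <= k < n.+1) (k + r)`! * rstirling2 r (n + r) (k + r).

(* Main.v *)
Require Import Defs.
From mathcomp Require Import all_boot.
From mathcomp Require Import all_order all_algebra.
From mathcomp Require Import ring zify.
Set Implicit Arguments. Unset Strict Implicit. Unset Printing Implicit Defensive.
Import GRing.Theory Num.Theory.

Section Diff.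
Local Open Scope ring_scope.

Fixpoint D (k : nat) (f : nat -> int) (x : nat) : int :=
  if k is k'.+1 then D k' f x.+1 - D k' f x else f x.

Lemma D_ext k f g x : (forall y, f y = g y) -> D k f x = D k g x.
Proof. by move=> fg; elim: k x => [|k IH] x //=; rewrite !IH. Qed.

Lemma D_lin (I : finType) (c : I -> int) (g : I -> nat -> int) k x :
  D k (fun y => \sum_i c i * g i y) x = \sum_i c i * D k (g i) x.
Proof.
elim: k x => [|k IH] x //=; rewrite !IH -sumrB; apply: eq_bigr => i _.
by rewrite -mulrBr.
Qed.

Lemma ffD x J : ((x.+1 ^_ J)%:Z - (x ^_ J)%:Z) = J%:Z * (x ^_ J.-1)%:Z.
Proof.
case: J => [|j] /=; first by rewrite subrr mul0r.
rewrite ffactSS ffactnSr.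
have [lt|le] := ltnP x j; first by rewrite (ffact_small lt) !muln0 mul0n !mulr0 subrr.
rewrite !PoszM -(subzn le) !intS; ring.
Qed.

Lemma D_ffact k K x : D k (fun y => (y ^_ K)%:Z) x = (K ^_ k)%:Z * (x ^_ (K - k))%:Z.
Proof.
elim: k x => [|k IH] x /=; first by rewrite subn0 mul1r.
rewrite !IH -mulrBr ffD ffactnSr PoszM mulrA subnS.
done.
Qed.

Lemma D_form k f x :
  D k f x = \sum_(i < k.+1) (-1) ^+ (k - i) * ('C(k, i))%:Z * f (x + i)%N.
Proof.
elim: k x => [|k IH] x /=.
  by rewrite big_ord1 /= expr0 mul1r addn0 mul1r.
rewrite !IH [in RHS]big_ord_recl /= subn0 bin0 mulr1 addn0.
under [in RHS]eq_bigr => i _ do rewrite /bump /= add1n subSS binS PoszD mulrDr mulrDl.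
rewrite big_split /= (addrC (\sum_(i < k.+1) (-1) ^+ (k - i) * ('C(k, i.+1))%:Z * f (x + i.+1)%N)) addrCA.
congr (_ + _).
  by apply: eq_bigr => i _; rewrite addnS addSn.
rewrite [in LHS]big_ord_recl [in RHS]big_ord_recr /= (bin_small (ltnSn k)) mulr0 mul0r addr0.
rewrite subn0 bin0 mulr1 addn0 opprD exprS mulN1r; congr (_ + _).
  by rewrite mulNr.
rewrite -sumrN; apply: eq_bigr => i _; rewrite /bump /= add1n addnS.
have hi : (k - i = (k - i.+1).+1)%N by have := ltn_ord i; lia.
by rewrite hi exprS !mulNr mul1r.
Qed.
End Diff.


Section Comb.
Variable n : nat.
Local Notation N := n.+2.
Definition i0 : 'I_N := ord0.
Definition i1 : 'I_N := @Ordinal N 1 isT.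

Definition cons2 (P : {set {set 'I_N}}) :=
  [forall i : 'I_N, forall j : 'I_N,
     ((i < 2) && (j < 2) && (i != j)) ==> (pblock P i != pblock P j)].

Lemma cons2E P : cons2 P = (pblock P i0 != pblock P i1).
Proof.
apply/forallP/idP => [H | H i].
  by have /forallP/(_ i1) := H i0.
apply/forallP => j; apply/implyP => /andP[/andP[hi hj] hij].
have e0 : forall k : 'I_N, k < 2 -> k != i1 -> k = i0.
  by move=> k hk hk1; apply/val_inj => /=; move: hk hk1; rewrite -val_eqE /=; case: (val k) => [|[|]].
have e1 : forall k : 'I_N, k < 2 -> k != i0 -> k = i1.
  by move=> k hk hk1; apply/val_inj => /=; move: hk hk1; rewrite -val_eqE /=; case: (val k) => [|[|]].
have [ei|ni1] := eqVneq i i1.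
  subst i; have -> : j = i0 by apply: e0 => //; rewrite eq_sym.
  by rewrite eq_sym.
have ei := e0 i hi ni1; subst i.
have -> : j = i1 by apply: e1 => //; rewrite eq_sym.
done.
Qed.

Lemma preim_pblock X (f : {ffun 'I_N -> 'I_X}) x y :
  (pblock (preim_partition f [set: 'I_N]) x == pblock (preim_partition f [set: 'I_N]) y)
  = (f x == f y).
Proof.
have /and3P[/eqP hc ht _] := preim_partitionP f [set: 'I_N].
rewrite eq_pblock // ?hc ?inE //.
rewrite /preim_partition pblock_equivalence_partition ?inE //.
by move=> a b c _ _ _; split=> // /eqP ->.
Qed.

Lemma fiber X (P : {set {set 'I_N}}) : partition P [set: 'I_N] ->
  #|[set f : {ffun 'I_N -> 'I_X} | preim_partition f [set: 'I_N] == P]| = X ^_ #|P|.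
Proof.
move=> hP; have /and3P[/eqP hc ht h0] := hP.
have pbP i : pblock P i \in P by rewrite pblock_mem // hc inE.
have H := pbP i0.
pose rk := enum_rank_in H.
pose Phi := fun g : {ffun 'I_#|P| -> 'I_X} => [ffun i => g (rk (pblock P i))].
have nz k : exists x, x \in (enum_val (A := P) k : {set 'I_N}).
  have ek : enum_val k \in P := enum_valP (A := P) k.
  have /set0Pn[x xk] : enum_val k != set0 by apply: contraNneq h0 => <-.
  by exists x.
have Phi_inj : injective Phi.
  move=> g1 g2 e; apply/ffunP => k.
  have [x xk] := nz k.
  have pbx : pblock P x = enum_val k := def_pblock ht (enum_valP (A := P) k) xk.
  move/ffunP/(_ x): e; rewrite /Phi !ffunE pbx /rk enum_valK_in.
  done.
have -> : [set f : {ffun 'I_N -> 'I_X} | preim_partition f [set: 'I_N] == P]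
          = Phi @: [set g : {ffun 'I_#|P| -> 'I_X} | injectiveb g].
  apply/setP => f; rewrite !inE; apply/eqP/imsetP.
  - move=> hf.
    have hb x y : (pblock P x == pblock P y) = (f x == f y) by rewrite -hf preim_pblock.
    pose xk k := odflt i0 [pick x in (enum_val (A := P) k : {set 'I_N})].
    have xkP k : xk k \in (enum_val (A := P) k : {set 'I_N}).
      rewrite /xk; case: pickP => [x //|none]; have [x xk'] := nz k.
      by have := none x; rewrite xk'.
    have pbk k : pblock P (xk k) = enum_val k := def_pblock ht (enum_valP (A := P) k) (xkP k).
    exists [ffun k => f (xk k)].
      rewrite inE; apply/injectiveP => k1 k2; rewrite !ffunE => /eqP.
      by rewrite -hb !pbk => /eqP /enum_val_inj.
    apply/ffunP => i; rewrite /Phi !ffunE.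
    have := pbk (rk (pblock P i)); rewrite /rk enum_rankK_in // => e.
    by apply/eqP; rewrite -hb e.
  - case=> g; rewrite inE => /injectiveP ginj ->.
    rewrite -[RHS](preim_partition_pblock hP).
    apply: eq_in_imset => x _; apply/setP => y; rewrite !inE /Phi !ffunE.
    rewrite (inj_eq ginj); congr (_ && _).
    apply/eqP/eqP => [|-> //]; exact: enum_rank_in_inj.
rewrite card_in_imset; last by move=> g1 g2 _ _; exact: Phi_inj.
by rewrite card_inj_ffuns !card_ord.
Qed.

Definition Pset := [set P : {set {set 'I_N}} | partition P [set: 'I_N] && cons2 P].

Lemma count_ne X :
  #|[set f : {ffun 'I_N -> 'I_X} | f i0 != f i1]| = \sum_(P in Pset) X ^_ #|P|.
Proof.
rewrite -sum1_card (partition_big (fun f : {ffun 'I_N -> 'I_X} => preim_partition f [set: 'I_N]) (mem Pset)) /=.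
  apply: eq_bigr => P; rewrite inE => /andP[hP hc].
  rewrite -(fiber X hP) -sum1_card; apply: eq_bigl => f; rewrite !inE.
  apply/andP/idP => [[_ ->] //|/eqP hf]; split; last by rewrite hf.
  by rewrite -preim_pblock hf -cons2E.
move=> f; rewrite !inE => hf; rewrite preim_partitionP /= cons2E.
by rewrite preim_pblock.
Qed.

Lemma card_le P : partition P [set: 'I_N] -> #|P| <= N.
Proof.
move=> hP; have /and3P[_ _ h0] := hP.
rewrite -[X in _ <= X]card_ord -cardsT (card_partition hP) -sum1_card.
apply: leq_sum => A hA; rewrite card_gt0; apply: contraNneq h0 => <-; done.
Qed.

Lemma sum_Pset X : \sum_(P in Pset) X ^_ #|P| = \sum_(K < N.+1) rstirling2 2 N K * X ^_ K.
Proof.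
rewrite (partition_big (fun P : {set {set 'I_N}} => (inord #|P| : 'I_N.+1)) predT) //=.
apply: eq_bigr => K _.
rewrite /rstirling2 -sum1_card big_distrl /=.
apply: eq_big => [P|P]; last first.
  by rewrite inE => /andP[/andP[hP _] /eqP <-]; rewrite mul1n inordK // ltnS card_le.
rewrite !inE; apply/andP/and3P.
  case=> /andP[hP hc] /eqP <-; split => //; rewrite inordK // ltnS card_le //.
case=> hP /eqP hK hc; split; first by rewrite hP.
by apply/eqP/val_inj; rewrite /= inordK hK // ltnS -hK card_le.
Qed.

Lemma count_eq X : #|[set f : {ffun 'I_N -> 'I_X} | f i0 == f i1]| = X ^ n.+1.
Proof.
pose Phi := fun g : {ffun 'I_n.+1 -> 'I_X} => [ffun i : 'I_N => g (inord i.-1)].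
have Phi_inj : injective Phi.
  move=> g1 g2 e; apply/ffunP => j; move/ffunP/(_ (inord j.+1)): e.
  rewrite !ffunE inordK /=; last by rewrite ltnS.
  by rewrite inord_val.
have -> : [set f : {ffun 'I_N -> 'I_X} | f i0 == f i1] = Phi @: setT.
  apply/setP => f; rewrite !inE; apply/idP/imsetP => [/eqP hf|[g _ ->]].
    exists [ffun j : 'I_n.+1 => f (inord j.+1)] => //.
    apply/ffunP => i; rewrite !ffunE inordK; last by case: i => [[|i]] //= /ltnW.
    case: i => [[|i] hi] /=.
      transitivity (f i0); first by congr (f _); apply/val_inj.
      by rewrite hf; congr (f _); apply/val_inj; rewrite /= inordK.
    by congr (f _); apply/val_inj; rewrite /= inordK.
  by rewrite !ffunE.
rewrite card_in_imset; last by move=> g1 g2 _ _; exact: Phi_inj.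
by rewrite cardsT card_ffun !card_ord.
Qed.

Lemma count_ne2 X : #|[set f : {ffun 'I_N -> 'I_X} | f i0 != f i1]| = X ^ N - X ^ n.+1.
Proof.
have e : [set f : {ffun 'I_N -> 'I_X} | f i0 != f i1] = ~: [set f : {ffun 'I_N -> 'I_X} | f i0 == f i1].
  by apply/setP => f; rewrite !inE.
have := cardsC [set f : {ffun 'I_N -> 'I_X} | f i0 == f i1].
rewrite -e count_eq card_ffun !card_ord => <-; lia.
Qed.

Lemma poly_id X :
  ((X%:Z) ^+ N - (X%:Z) ^+ n.+1)%R =
  (\sum_(K < N.+1) (rstirling2 2 N K)%:Z * (X ^_ K)%:Z)%R.
Proof.
have le : X ^ n.+1 <= X ^ N.
  case: X => [|X]; first by rewrite !exp0n.
  by rewrite leq_pexp2l.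
have hX k : Posz (X ^ k) = ((X%:Z) ^+ k)%R.
  by elim: k => [//|k IH]; rewrite expnS exprS PoszM IH.
rewrite -!hX (subzn le) -count_ne2 count_ne sum_Pset.
rewrite (big_morph Posz PoszD (erefl _)); apply: eq_bigr => K _.
by rewrite PoszM.
Qed.
End Comb.

Section Rep.
Local Open Scope ring_scope.
Definition h (n : nat) (X : nat) : int := (X%:Z) ^+ n.+2 - (X%:Z) ^+ n.+1.

Lemma Dh n j : D j (h n) 0 = if (j < n.+3)%N then (rstirling2 2 n.+2 j * j`!)%:Z else 0.
Proof.
rewrite (D_ext _ _ (poly_id n)).
rewrite (D_lin (fun K : 'I_n.+3 => (rstirling2 2 n.+2 K)%:Z) (fun K y => (y ^_ K)%:Z)).
under eq_bigr => K _ do rewrite D_ffact -!PoszM.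
case: ifP => hj.
  rewrite (bigD1 (Ordinal hj)) //= subnn ffactnn big1 ?addr0.
    by rewrite ffactn0 muln1.
  move=> K hK; have hK' : (val K != j)%N by apply: contra hK => /eqP e; apply/eqP/val_inj.
  case: (ltngtP K j) => [lt|gt|e]; last by move/eqP: e; rewrite (negbTE hK').
    by rewrite ffact_small // mul0n muln0.
  by rewrite ffact0n (_ : (K - j == 0)%N = false) ?muln0 //; lia.
rewrite big1 // => K _; rewrite ffact_small ?mul0n ?muln0 //.
have := ltn_ord K; lia.
Qed.

Lemma rfubE n : (rfubini n 2)%:Z = \sum_(k < n.+1) D k.+2 (h n) 0.
Proof.
rewrite /rfubini big_mkord (big_morph Posz PoszD (erefl _)).
apply: eq_bigr => k _; rewrite Dh !addn2 ltnS ltnS (ltn_ord k) mulnC //.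
Qed.

Lemma dvdz_natE (a b : nat) : ((a%:Z) %| (b%:Z))%Z = (a %| b)%N.
Proof. by rewrite dvdzE. Qed.

Lemma Dh_dvd n j : (((j`!)%:Z) %| D j (h n) 0)%Z.
Proof.
rewrite Dh; case: ifP => _; last exact: dvdz0.
by rewrite dvdz_natE dvdn_mull.
Qed.

Lemma fact_dvd m k : (m <= k)%N -> (m`! %| k`!)%N.
Proof.
elim: k => [|k IH]; first by rewrite leqn0 => /eqP ->.
rewrite leq_eqVlt => /orP[/eqP -> //|]; rewrite ltnS => /IH.
by rewrite factS; apply: dvdn_mull.
Qed.

Lemma dvdz_sumP (I : finType) (d : int) (F : I -> int) :
  (forall i, (d %| F i)%Z) -> (d %| \sum_i F i)%Z.
Proof.
move=> H; apply: (big_ind (fun s => (d %| s)%Z)); first exact: dvdz0.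
  by move=> x y; apply: rpredD.
by move=> i _; apply: H.
Qed.

Lemma sum_trunc (x : nat -> int) (A B : nat) (d : int) :
  (forall k, (B <= k)%N -> (d %| x k)%Z) -> (forall k, (A <= k)%N -> x k = 0) ->
  (d %| \sum_(k < A) x k - \sum_(k < B) x k)%Z.
Proof.
move=> hB hA; rewrite -!(big_mkord xpredT).
have [le|lt] := leqP A B.
  rewrite (big_cat_nat (leq0n A) le) /= opprD addrA subrr add0r rpredN.
  rewrite big_nat_cond big1 ?dvdz0 // => k /andP[/andP[hk _] _]; exact: hA.
rewrite (big_cat_nat (leq0n B) (ltnW lt)) /= addrC addrK.
rewrite big_nat_cond; apply: (big_ind (fun s => (d %| s)%Z)); first exact: dvdz0.
  by move=> a b; apply: rpredD.
by move=> k /andP[/andP[hk _] _]; apply: hB.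
Qed.

Definition coef (k i : nat) : int := (-1) ^+ (k.+2 - i) * ('C(k.+2, i))%:Z * (i%:Z - 1).

Lemma rep M L (hL : (2 ^ M %| (L.+2)`!)%N) n :
  (((2 ^ M)%N%:Z) %| (rfubini n 2)%:Z - \sum_(k < L) \sum_(i < L.+2) coef k i * (i%:Z) ^+ n.+1)%Z.
Proof.
have e k : (k < L)%N -> D k.+2 (h n) 0 = \sum_(i < L.+2) coef k i * (i%:Z) ^+ n.+1.
  move=> hk; rewrite D_form.
  rewrite (big_ord_widen L.+2 (fun i => (-1) ^+ (k.+2 - i) * ('C(k.+2, i))%:Z * h n (0 + i)%N)); last by lia.
  rewrite big_mkcond; apply: eq_bigr => i _; case: ifP => hi.
    by rewrite /h /coef add0n exprS; ring.
  by rewrite /coef bin_small ?mulr0 ?mul0r //; lia.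
rewrite rfubE.
rewrite (eq_bigr (fun k : 'I_L => D k.+2 (h n) 0)); last by move=> k _; rewrite e.
apply: (sum_trunc (x := fun k => D k.+2 (h n) 0)).
  move=> k hk; apply: dvdz_trans (Dh_dvd n k.+2).
  by rewrite dvdz_natE (dvdn_trans hL) // fact_dvd.
by move=> k hk; rewrite Dh; have -> : (k.+2 < n.+3)%N = false by lia.
Qed.
End Rep.


Section NT.
Local Open Scope ring_scope.

Lemma PoszX b k : Posz (b ^ k) = (b%:Z) ^+ k.
Proof. by elim: k => [//|k IH]; rewrite expnS exprS PoszM IH. Qed.

Definition w (b : nat) : nat := (b./2 * (b./2).+1)./2.

Lemma wE b : odd b -> (b * b = 8 * w b + 1)%N.
Proof.
move=> ob; rewrite /w.
set c := b./2.
have hb : b = (c.*2).+1 by rewrite -[LHS]odd_double_half ob add1n.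
have e2 : (c * c.+1 = (c * c.+1)./2.*2)%N.
  by rewrite -[LHS]odd_double_half oddM /= andbN add0n.
move: e2; set v := (c * c.+1)./2 => e2.
rewrite hb -!muln2 in e2 *; nia.
Qed.

Lemma wEz b : odd b -> (b%:Z) ^+ 2 = 1 + 8 * (w b)%:Z.
Proof.
move=> ob; rewrite expr2 -PoszM wE // PoszD PoszM addrC //.
Qed.

Fixpoint Rf (w : int) (s : nat) : int :=
  if s is s'.+1 then
    let P := (2 ^ s')%N%:Z in let R := Rf w s' in
    R + P * (2 * (P - 1) * w ^+ 3 + 8 * R * w + 4 * (P - 1) ^+ 2 * w ^+ 4
             + 32 * (P - 1) * w ^+ 2 * R + 64 * R ^+ 2)
  else 0.

Lemma pow_exp (x v : int) (hx : x ^+ 2 = 1 + 8 * v) s :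
  let P := (2 ^ s)%N%:Z in
  x ^+ (2 ^ s.+1) = 1 + 8 * P * v + 32 * P * (P - 1) * v ^+ 2 + 128 * P * Rf v s.
Proof.
elim: s => [|s IH] /=.
  by rewrite hx; ring.
rewrite expnS mulnC exprM IH.
rewrite expnS PoszM.
set P := Posz (2 ^ s); set R := Rf v s.
ring.
Qed.
End NT.


Section Abs.
Local Open Scope ring_scope.
Variables (I : finType) (a : I -> int) (b : I -> nat).
Definition G n := \sum_i a i * (b i)%:Z ^+ n.+1.
Definition Go n := \sum_(i | odd (b i)) a i * (b i)%:Z ^+ n.+1.
Definition Aa n := \sum_(i | odd (b i)) a i * (b i)%:Z ^+ n.+1 * (w (b i))%:Z.
Definition Bb n := \sum_(i | odd (b i)) a i * (b i)%:Z ^+ n.+1 * (w (b i))%:Z ^+ 2.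

Lemma G_Go M n : (M <= n.+1)%N -> ((2 ^ M)%N%:Z %| G n - Go n)%Z.
Proof.
move=> hM; rewrite /G /Go (bigID (fun i => odd (b i))) /= addrAC subrr add0r.
apply: rpred_sum => i hi; apply: dvdz_mull; rewrite -PoszX dvdz_natE.
apply: dvdn_trans (dvdn_exp2l 2 hM) _.
by rewrite dvdn_exp2r // dvdn2.
Qed.

Lemma Go_shift n j :
  Go (n + j) = \sum_(i | odd (b i)) a i * (b i)%:Z ^+ n.+1 * (b i)%:Z ^+ j.
Proof. by apply: eq_bigr => i _; rewrite -addSn exprD mulrA. Qed.

Lemma I1 n : Go (n + 2) - Go n = 8 * Aa n.
Proof.
rewrite Go_shift /Go /Aa mulr_sumr -sumrB; apply: eq_bigr => i oi.
rewrite (wEz oi); ring.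
Qed.

Lemma I2 n : Go (n + 4) - 2 * Go (n + 2) + Go n = 64 * Bb n.
Proof.
rewrite !Go_shift /Go /Bb !mulr_sumr -sumrB -big_split /=; apply: eq_bigr => i oi.
have -> : (b i)%:Z ^+ 4 = ((b i)%:Z ^+ 2) ^+ 2 by rewrite -exprM.
rewrite (wEz oi); ring.
Qed.

Lemma I3 n s : let P := (2 ^ s)%N%:Z in
  Go (n + 2 ^ s.+1) - Go n =
  8 * P * Aa n + 32 * P * (P - 1) * Bb n +
  128 * P * \sum_(i | odd (b i)) a i * (b i)%:Z ^+ n.+1 * Rf (w (b i))%:Z s.
Proof.
move=> P; rewrite Go_shift /Go /Aa /Bb !mulr_sumr -sumrB -!big_split /=.
apply: eq_bigr => i oi; rewrite (pow_exp (wEz oi) s) -/P; ring.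
Qed.

Lemma main_abs (F : nat -> int) s n (hn : (s + 7 <= n.+1)%N)
  (hF : forall k, ((2 ^ (s + 7))%N%:Z %| F k - G k)%Z)
  (C1 : (128 %| F (n + 2)%N - F n)%Z)
  (C2 : (1 <= s)%N -> (256 %| F (n + 4)%N - F n)%Z) :
  ((2 ^ (s + 7))%N%:Z %| F (n + 2 ^ s.+1)%N - F n)%Z.
Proof.
set d := (2 ^ (s + 7))%N%:Z.
have hGo k : (n <= k)%N -> (d %| F k - Go k)%Z.
  move=> hk; have -> : F k - Go k = (F k - G k) + (G k - Go k) by ring.
  by rewrite rpredD // G_Go //; lia.
have ed : d = 128 * (2 ^ s)%N%:Z by rewrite /d expnD PoszM mulrC.
have d128 : (128 %| d)%Z by rewrite ed dvdz_mulr.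
have hA : (16 %| Aa n)%Z.
  have : (128 %| Go (n + 2) - Go n)%Z.
    have -> : Go (n + 2) - Go n = (F (n + 2)%N - F n) - (F (n + 2)%N - Go (n + 2)) + (F n - Go n) by ring.
    apply: rpredD; first apply: rpredB => //.
      by apply: dvdz_trans d128 _; apply: hGo; lia.
    by apply: dvdz_trans d128 _; apply: hGo; lia.
  by rewrite I1 (_ : 128 = 8 * 16) // dvdz_mul2l.
have hB : (1 <= s)%N -> (4 %| Bb n)%Z.
  move=> hs; have : (256 %| Go (n + 4) - 2 * Go (n + 2) + Go n)%Z.
    have -> : Go (n + 4) - 2 * Go (n + 2) + Go n =
      (F (n + 4)%N - F n) - 2 * (F (n + 2)%N - F n)
      - (F (n + 4)%N - Go (n + 4)) + 2 * (F (n + 2)%N - Go (n + 2)) - (F n - Go n) by ring.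
    have d256 : (256 %| d)%Z.
      rewrite /d (_ : (s + 7 = 8 + (s - 1))%N); last lia.
      by rewrite expnD PoszM; apply: dvdz_mulr.
    apply: rpredB; first apply: rpredD; first apply: rpredB; first apply: rpredB.
    - exact: C2.
    - by rewrite (_ : 256 = 2 * 128) // dvdz_mul.
    - by apply: dvdz_trans d256 _; apply: hGo; lia.
    - by apply: dvdz_mull; apply: dvdz_trans d256 _; apply: hGo; lia.
    - by apply: dvdz_trans d256 _; apply: hGo; lia.
  by rewrite I2 (_ : 256 = 64 * 4) // dvdz_mul2l.
have -> : F (n + 2 ^ s.+1)%N - F n =
  (F (n + 2 ^ s.+1)%N - Go (n + 2 ^ s.+1)) - (F n - Go n) + (Go (n + 2 ^ s.+1) - Go n) by ring.
apply: rpredD; first apply: rpredB; try (apply: hGo; lia).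
rewrite I3 ed; set P := Posz (2 ^ s).
have [qa ->] := dvdzP hA.
rewrite !rpredD //.
- by rewrite (_ : 8 * P * (qa * 16) = 128 * P * qa); [apply: dvdz_mulr | ring].
- case: s hn hF C2 hB @P @d ed d128 hGo hA => [|s] hn hF C2 hB P d ed d128 hGo hA.
    by rewrite /P expn0 subrr !mulr0 mul0r dvdz0.
  have [qb ->] := dvdzP (hB isT).
  by rewrite (_ : 32 * P * (P - 1) * (qb * 4) = 128 * P * ((P - 1) * qb)); [apply: dvdz_mulr | ring].
- by apply: dvdz_mulr.
Qed.
End Abs.


Section Base.
Local Open Scope ring_scope.

Definition aL (L : nat) (p : ('I_L * 'I_L.+2)%type) : int := coef p.1 p.2.
Definition bL (L : nat) (p : ('I_L * 'I_L.+2)%type) : nat := p.2.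

Lemma GE L n : G (@aL L) (@bL L) n = \sum_(k < L) \sum_(i < L.+2) coef k i * (i%:Z) ^+ n.+1.
Proof. by rewrite /G pair_bigA. Qed.

Lemma AaE L n : Aa (@aL L) (@bL L) n =
  \sum_(0 <= k < L) \sum_(0 <= i < L.+2 | odd i) coef k i * (i%:Z) ^+ n.+1 * (w i)%:Z.
Proof.
rewrite /Aa -(pair_big_dep xpredT (fun _ (j : 'I_L.+2) => odd j)
  (fun (k : 'I_L) (j : 'I_L.+2) => coef k j * (j%:Z) ^+ n.+1 * (w j)%:Z)) /=.
rewrite big_mkord; apply: eq_bigr => k _.
by rewrite big_mkord.
Qed.

Lemma BbE L n : Bb (@aL L) (@bL L) n =
  \sum_(0 <= k < L) \sum_(0 <= i < L.+2 | odd i) coef k i * (i%:Z) ^+ n.+1 * (w i)%:Z ^+ 2.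
Proof.
rewrite /Bb -(pair_big_dep xpredT (fun _ (j : 'I_L.+2) => odd j)
  (fun (k : 'I_L) (j : 'I_L.+2) => coef k j * (j%:Z) ^+ n.+1 * (w j)%:Z ^+ 2)) /=.
rewrite big_mkord; apply: eq_bigr => k _.
by rewrite big_mkord.
Qed.

Lemma Zp16 (x : int) : (x%:~R : 'Z_16) = 0 -> (16 %| x)%Z.
Proof.
case: x => k.
  move=> /(congr1 val); rewrite [LHS](val_Zp_nat (isT : (1 < 16)%N)) /= => hk.
  by rewrite dvdz_natE; apply/dvdnP; exists (k %/ 16)%N; rewrite {1}(divn_eq k 16) hk addn0.
rewrite NegzE rpredN => /eqP; rewrite mulrNz oppr_eq0 => /eqP.
move=> /(congr1 val); rewrite [LHS](val_Zp_nat (isT : (1 < 16)%N)) /= => hk.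
by rewrite dvdz_natE; apply/dvdnP; exists (k.+1 %/ 16)%N; rewrite {1}(divn_eq k.+1 16) hk addn0.
Qed.

Lemma per16 (f : nat -> int) : (forall n, (16 %| f (n + 4)%N - f n)%Z) ->
  (forall r, (r < 4)%N -> (16 %| f r)%Z) -> forall n, (16 %| f n)%Z.
Proof.
move=> hp hb n; elim: n {-2}n (leqnn n) => [|N IH] n hn.
  by apply: hb; lia.
have [lt|ge] := ltnP n 4; first exact: hb.
have -> : f n = (f (n - 4 + 4)%N - f (n - 4)%N) + f (n - 4)%N.
  by rewrite subnK // subrK.
by rewrite rpredD // IH //; lia.
Qed.

Variables (I : finType) (a : I -> int) (b : I -> nat).

Lemma Aa_per n : (16 %| Aa a b (n + 4)%N - Aa a b n)%Z.
Proof.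
have -> : Aa a b (n + 4)%N - Aa a b n =
  16 * \sum_(i | odd (b i)) a i * (b i)%:Z ^+ n.+1 * (w (b i))%:Z * ((w (b i))%:Z + 4 * (w (b i))%:Z ^+ 2).
  rewrite /Aa mulr_sumr -sumrB; apply: eq_bigr => i oi.
  rewrite -addSn exprD.
  have -> : (b i)%:Z ^+ 4 = ((b i)%:Z ^+ 2) ^+ 2 by rewrite -exprM.
  rewrite (wEz oi); ring.
exact: dvdz_mulr.
Qed.

Lemma Bb_per n : (16 %| Bb a b (n + 4)%N - Bb a b n)%Z.
Proof.
have -> : Bb a b (n + 4)%N - Bb a b n =
  16 * \sum_(i | odd (b i)) a i * (b i)%:Z ^+ n.+1 * (w (b i))%:Z ^+ 2 * ((w (b i))%:Z + 4 * (w (b i))%:Z ^+ 2).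
  rewrite /Bb mulr_sumr -sumrB; apply: eq_bigr => i oi.
  rewrite -addSn exprD.
  have -> : (b i)%:Z ^+ 4 = ((b i)%:Z ^+ 2) ^+ 2 by rewrite -exprM.
  rewrite (wEz oi); ring.
exact: dvdz_mulr.
Qed.

Lemma Go4 n : Go a b (n + 4)%N - Go a b n = 16 * (Aa a b n + 4 * Bb a b n).
Proof.
have -> : Go a b (n + 4)%N - Go a b n =
  (Go a b (n + 4) - 2 * Go a b (n + 2) + Go a b n) + 2 * (Go a b (n + 2) - Go a b n) by ring.
rewrite I1 I2; ring.
Qed.
End Base.

Section Fin.
Local Open Scope ring_scope.
Definition Fz (n : nat) : int := (rfubini n 2)%:Z.

Lemma baseC1 n : (6 <= n)%N -> (128 %| Fz (n + 2)%N - Fz n)%Z.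
Proof.
move=> hn.
have hF k : (128 %| Fz k - G (@aL 6) (@bL 6) k)%Z.
  by rewrite GE; apply: (@rep 7 6); vm_compute.
have hGo k : (n <= k)%N -> (128 %| Fz k - Go (@aL 6) (@bL 6) k)%Z.
  move=> hk; have -> : Fz k - Go (@aL 6) (@bL 6) k =
    (Fz k - G (@aL 6) (@bL 6) k) + (G (@aL 6) (@bL 6) k - Go (@aL 6) (@bL 6) k) by ring.
  apply: rpredD; first exact: hF.
  by apply: (G_Go _ _ (M := 7)); lia.
have hA : (16 %| Aa (@aL 6) (@bL 6) n)%Z.
  apply: per16 => [k|r hr]; first exact: Aa_per.
  apply: Zp16; rewrite AaE rmorph_sum.
  under eq_bigr => k _ do rewrite rmorph_sum.
  under eq_bigr => k _ do under eq_bigr => i _ do rewrite !rmorphM rmorphXn.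
  apply/eqP; rewrite unlock.
  by case: r hr => [|[|[|[|]]]] //= _; vm_compute.
have -> : Fz (n + 2)%N - Fz n =
  (Fz (n + 2)%N - Go (@aL 6) (@bL 6) (n + 2)) - (Fz n - Go (@aL 6) (@bL 6) n)
  + (Go (@aL 6) (@bL 6) (n + 2) - Go (@aL 6) (@bL 6) n) by ring.
rewrite I1; apply: rpredD; first apply: rpredB; try (apply: hGo; lia).
by rewrite (_ : 128 = 8 * 16) // dvdz_mul2l.
Qed.

Lemma baseC2 n : (7 <= n)%N -> (256 %| Fz (n + 4)%N - Fz n)%Z.
Proof.
move=> hn.
have hF k : (256 %| Fz k - G (@aL 8) (@bL 8) k)%Z.
  by rewrite GE; apply: (@rep 8 8); vm_compute.
have hGo k : (n <= k)%N -> (256 %| Fz k - Go (@aL 8) (@bL 8) k)%Z.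
  move=> hk; have -> : Fz k - Go (@aL 8) (@bL 8) k =
    (Fz k - G (@aL 8) (@bL 8) k) + (G (@aL 8) (@bL 8) k - Go (@aL 8) (@bL 8) k) by ring.
  apply: rpredD; first exact: hF.
  by apply: (G_Go _ _ (M := 8)); lia.
have hA : (16 %| Aa (@aL 8) (@bL 8) n + 4 * Bb (@aL 8) (@bL 8) n)%Z.
  apply: (per16 (f := fun n => Aa (@aL 8) (@bL 8) n + 4 * Bb (@aL 8) (@bL 8) n)) => [k|r hr].
    have -> : Aa (@aL 8) (@bL 8) (k + 4) + 4 * Bb (@aL 8) (@bL 8) (k + 4)
       - (Aa (@aL 8) (@bL 8) k + 4 * Bb (@aL 8) (@bL 8) k) =
       (Aa (@aL 8) (@bL 8) (k + 4) - Aa (@aL 8) (@bL 8) k)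
       + 4 * (Bb (@aL 8) (@bL 8) (k + 4) - Bb (@aL 8) (@bL 8) k) by ring.
    by rewrite rpredD ?Aa_per // dvdz_mull // Bb_per.
  apply: Zp16; rewrite AaE BbE rmorphD rmorphM !rmorph_sum.
  under eq_bigr => k _ do rewrite rmorph_sum.
  under eq_bigr => k _ do under eq_bigr => i _ do rewrite !rmorphM rmorphXn.
  under [in X in _ * X]eq_bigr => k _ do rewrite rmorph_sum.
  under [in X in _ * X]eq_bigr => k _ do under eq_bigr => i _ do rewrite !rmorphM !rmorphXn.
  apply/eqP; rewrite unlock.
  by case: r hr => [|[|[|[|]]]] //= _; vm_compute.
have -> : Fz (n + 4)%N - Fz n =
  (Fz (n + 4)%N - Go (@aL 8) (@bL 8) (n + 4)) - (Fz n - Go (@aL 8) (@bL 8) n)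
  + (Go (@aL 8) (@bL 8) (n + 4) - Go (@aL 8) (@bL 8) n) by ring.
rewrite Go4; apply: rpredD; first apply: rpredB; try (apply: hGo; lia).
by rewrite (_ : 256 = 16 * 16) // dvdz_mul2l.
Qed.

End Fin.

Lemma pow2_fact M : (2 ^ M %| (M.*2)`!)%N.
Proof.
elim: M => [//|M IH].
rewrite expnS doubleS !factS mulnA; apply: dvdn_mul.
  by apply: dvdn_mulr; rewrite -doubleS -muln2 dvdn_mull.
exact: IH.
Qed.

Theorem theorem4p4 (m : nat) (hm : 7 <= m) (n : nat) (hn : m - 1 <= n) :
  rfubini (n + 2 ^ (m - 6)) 2 = rfubini n 2 %[mod 2 ^ m].
Proof.
have [s es] : exists s, m = s + 7 by exists (m - 7); lia.
subst m.
have e6 : (s + 7 - 6 = s.+1)%N by lia.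
rewrite e6.
have H := @main_abs _ (@aL (s + 7).*2) (@bL (s + 7).*2) Fz s n ltac:(lia).
have hF : forall k, ((2 ^ (s + 7))%N%:Z %| (Fz k - G (@aL (s + 7).*2) (@bL (s + 7).*2) k)%R)%Z.
  move=> k; rewrite GE; apply: rep.
  by apply: dvdn_trans (pow2_fact _) (fact_dvd _); lia.
have := H hF (@baseC1 n ltac:(lia)) (fun _ => @baseC2 n ltac:(lia)).
rewrite -eqz_mod_dvd /Fz => /eqP; rewrite !modz_nat => -[].
done.
Qed.
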